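(* In the setting described in the context, let $U_0,\dots,U_d$ be one of the six decompositions below, with $U_{-1}=U_{d+1}=0$ and empty sums equal to $0$. Then for $0\le i\le d$: $[0D]$: $(K-q^{2i-d}I)U_i\subseteq U_{i+1}+\cdots+U_d$ and $(K^{-1}-q^{d-2i}I)U_i\subseteq U_{i+1}$; $[0^*D^*]$: $(K-q^{2i-d}I)U_i\subseteq U_{i-1}$ and $(K^{-1}-q^{d-2i}I)U_i\subseteq U_0+\cdots+U_{i-1}$; $[0^*D]$: $(K-q^{2i-d}I)U_i=0$ and $(K^{-1}-q^{d-2i}I)U_i=0$; $[0^*0]$: $(K-q^{2i-d}I)U_i\subseteq U_0+\cdots+U_{i-1}$ and $(K^{-1}-q^{d-2i}I)U_i\subseteq U_{i-1}$; $[D^*0]$: $KU_i\subseteq U_0+\cdots+U_{i+1}$ and $K^{-1}U_i\subseteq U_{i-1}+\cdots+U_d$; $[D^*D]$: $(K-q^{2i-d}I)U_i\subseteq U_{i+1}$ and $(K^{-1}-q^{d-2i}I)U_i\subseteq U_{i+1}+\cdots+U_d$.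
   Context: $\mathbb K$ is an algebraically closed field, $q\in\mathbb K$ nonzero and not a root of unity, $V$ a nonzero finite-dimensional $\mathbb K$-vector space. A tridiagonal pair on $V$ is an ordered pair $A,A^*$ of linear maps $V\to V$ such that: (i) each of $A,A^*$ is diagonalizable; (ii) there is an ordering $V_0,\dots,V_d$ of the eigenspaces of $A$ with $A^*V_i\subseteq V_{i-1}+V_i+V_{i+1}$ ($V_{-1}=V_{d+1}=0$); (iii) there is an ordering $V^*_0,\dots,V^*_\delta$ of the eigenspaces of $A^*$ with $AV^*_i\subseteq V^*_{i-1}+V^*_i+V^*_{i+1}$ ($V^*_{-1}=V^*_{\delta+1}=0$); (iv) no subspace $W\ne0,V$ satisfies $AW\subseteq W$, $A^*W\subseteq W$. It is known $d=\delta$; orderings as in (ii),(iii) are called standard. Setting: $A,A^*$ is a tridiagonal pair on $V$; $V_0,\dots,V_d$ (resp. $V^*_0,\dots,V^*_d$) is a standard ordering of the eigenspaces of $A$ (resp. $A^*$); the eigenvalue of $A$ on $V_i$ is $aq^{2i-d}$ and that of $A^*$ on $V^*_i$ is $a^*q^{d-2i}$ for some nonzero $a,a^*\in\mathbb K$. The six decompositions of $V$ (sequences of nonzero subspaces whose sum is direct and equals $V$) are, for $0\le i\le d$: $[0D]$: $U_i=V_i$; $[0^*D^*]$: $U_i=V^*_i$; $[0^*D]$: $U_i=(V^*_0+\cdots+V^*_i)\cap(V_i+\cdots+V_d)$; $[0^*0]$: $U_i=(V^*_0+\cdots+V^*_i)\cap(V_0+\cdots+V_{d-i})$; $[D^*0]$: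 $U_i=(V^*_{d-i}+\cdots+V^*_d)\cap(V_0+\cdots+V_{d-i})$; $[D^*D]$: $U_i=(V^*_{d-i}+\cdots+V^*_d)\cap(V_i+\cdots+V_d)$. $K:V\to V$ is the linear map acting as $q^{2i-d}I$ on the $i$th subspace of $[0^*D]$ for each $i$. *)

(* Defs.v *)
From HB Require Import structures.
From mathcomp Require Import all_boot all_order all_algebra.
Set Implicit Arguments. Unset Strict Implicit. Unset Printing Implicit Defensive.
Import Order.TTheory GRing.Theory Num.Theory.
Local Open Scope ring_scope.

Section TDPairs.
Variables (F : fieldType) (V : vectType F).

Definition diagonalizable (A : 'End(V)) : Prop :=
  exists s : seq F, (\sum_(t <- s) passmx.leigenspace A t)%VS = fullv.

(* Sum of U_j for lo <= j <= hi, restricted to 0 <= j <= d (so that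
   U_{-1} = U_{d+1} = 0 and empty sums are 0). *)
Definition seg (d : nat) (U : nat -> {vspace V}) (lo hi : int) : {vspace V} :=
  (\sum_(j < d.+1 | ((lo <= (j : nat)%:Z)%R && ((j : nat)%:Z <= hi)%R)) U j)%VS.

Definition eigen_ordering (A : 'End(V)) (d : nat) (Vs : nat -> {vspace V}) : Prop :=
  [/\ forall i, (i <= d)%N -> exists th, Vs i = passmx.leigenspace A th /\ Vs i != 0%VS,
      forall th, passmx.leigenspace A th != 0%VS ->
        exists2 i, (i <= d)%N & Vs i = passmx.leigenspace A th
    & forall i j, (i <= d)%N -> (j <= d)%N -> Vs i = Vs j -> i = j].

Definition standard_ordering (A B : 'End(V)) (d : nat) (Vs : nat -> {vspace V}) : Prop :=
  eigen_ordering A d Vs /\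
  forall i, (i <= d)%N ->
    (B @: Vs i <= seg d Vs (i%:Z - 1) (i%:Z + 1))%VS.

Definition TD_irreducible (A As : 'End(V)) : Prop :=
  forall W : {vspace V}, (A @: W <= W)%VS -> (As @: W <= W)%VS ->
    W = 0%VS \/ W = fullv.

Definition tridiagonal_pair (A As : 'End(V)) : Prop :=
  [/\ (0 < \dim (fullv : {vspace V}))%N,
      diagonalizable A /\ diagonalizable As,
      (exists d Vs, standard_ordering A As d Vs),
      (exists d Vs, standard_ordering As A d Vs)
    & TD_irreducible A As].

Definition dec_0D (d : nat) (Vs Vss : nat -> {vspace V}) (i : nat) := Vs i.
Definition dec_0sDs (d : nat) (Vs Vss : nat -> {vspace V}) (i : nat) := Vss i.
Definition dec_0sD (d : nat) (Vs Vss : nat -> {vspace V}) (i : nat) :=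
  (seg d Vss 0 i%:Z :&: seg d Vs i%:Z d%:Z)%VS.
Definition dec_0s0 (d : nat) (Vs Vss : nat -> {vspace V}) (i : nat) :=
  (seg d Vss 0 i%:Z :&: seg d Vs 0 (d%:Z - i%:Z))%VS.
Definition dec_Ds0 (d : nat) (Vs Vss : nat -> {vspace V}) (i : nat) :=
  (seg d Vss (d%:Z - i%:Z) d%:Z :&: seg d Vs 0 (d%:Z - i%:Z))%VS.
Definition dec_DsD (d : nat) (Vs Vss : nat -> {vspace V}) (i : nat) :=
  (seg d Vss (d%:Z - i%:Z) d%:Z :&: seg d Vs i%:Z d%:Z)%VS.

End TDPairs.

(* Main.v *)
Require Import Defs.
From HB Require Import structures.
From mathcomp Require Import all_boot all_order all_algebra.
From mathcomp Require Import zify ring.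
Import Order.TTheory GRing.Theory Num.Theory.
Local Open Scope ring_scope.


Ltac clean_arith :=
  repeat match goal with
  | H : ?T |- _ =>
    lazymatch T with
    | is_true (leq _ _) => fail
    | is_true (@Order.le _ _ _ _) => fail
    | is_true (@Order.lt _ _ _ _) => fail
    | is_true (negb _) => fail
    | is_true (andb _ _) => fail
    | @eq nat _ _ => fail
    | @eq int _ _ => fail
    | nat => fail
    | int => fail
    | _ => clear H
    end
  end.
Ltac slia := clean_arith; lia.

Section Gen.
Variables (F : fieldType) (V : vectType F).
Implicit Types (U : nat -> {vspace V}) (X Y : {vspace V}).

Lemma seg_sub d U (lo hi : int) X :
  (forall j : nat, (j <= d)%N -> lo <= j%:Z -> j%:Z <= hi -> (U j <= X)%VS) ->
  (seg d U lo hi <= X)%VS.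
Proof. by move=> H; apply/subv_sumP => j /andP[h1 h2]; apply: H => //; rewrite -ltnS. Qed.

Lemma sub_seg d U (lo hi : int) (j : nat) :
  (j <= d)%N -> lo <= j%:Z -> j%:Z <= hi -> (U j <= seg d U lo hi)%VS.
Proof.
move=> jd h1 h2; have jd' : (j < d.+1)%N by [].
by apply: (sumv_sup (Ordinal jd')) => //=; rewrite h1 h2.
Qed.

Lemma mem_seg d U (lo hi : int) (j : nat) v :
  (j <= d)%N -> lo <= j%:Z -> j%:Z <= hi -> v \in U j -> v \in seg d U lo hi.
Proof. by move=> h1 h2 h3; apply/subvP/sub_seg. Qed.

Lemma seg_seg d U (lo hi lo' hi' : int) :
  (forall j : nat, (j <= d)%N -> lo <= j%:Z -> j%:Z <= hi -> lo' <= j%:Z /\ j%:Z <= hi') ->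
  (seg d U lo hi <= seg d U lo' hi')%VS.
Proof.
move=> H; apply: seg_sub => j h1 h2 h3; have [h4 h5] := H j h1 h2 h3.
exact: sub_seg.
Qed.

Lemma seg_map d U (lo hi : int) X (f : 'End(V)) :
  (forall j : nat, (j <= d)%N -> lo <= j%:Z -> j%:Z <= hi ->
     forall v, v \in U j -> f v \in X) ->
  forall v, v \in seg d U lo hi -> f v \in X.
Proof.
move=> H v Hv; rewrite memv_preim; apply: (subvP _ v Hv); apply: seg_sub.
move=> j h1 h2 h3; apply/subvP => w Hw; rewrite -memv_preim.
exact: (H j h1 h2 h3 w Hw).
Qed.

Lemma seg0 d U (lo hi : int) :
  (forall j : nat, (j <= d)%N -> lo <= j%:Z -> j%:Z <= hi -> False) ->
  seg d U lo hi = 0%VS.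
Proof.
move=> H; apply/eqP; rewrite -subv0; apply: seg_sub => j h1 h2 h3.
by case: (H j h1 h2 h3).
Qed.

Lemma img_sub (f : 'End(V)) X Y :
  (forall v, v \in X -> f v \in Y) -> (f @: X <= Y)%VS.
Proof. by move=> H; apply/subvP => w /memv_imgP[v Hv ->]; apply: H. Qed.

Lemma mem_img_sub (f : 'End(V)) X Y v :
  (f @: X <= Y)%VS -> v \in X -> f v \in Y.
Proof. by move=> H Hv; apply: (subvP H); apply: memv_img. Qed.

Lemma mem_eig (A : 'End(V)) t v :
  (v \in passmx.leigenspace A t) = (A v == t *: v).
Proof.
by rewrite /passmx.leigenspace memv_ker add_lfunE opp_lfunE scale_lfunE id_lfunE subr_eq0.
Qed.

Lemma lfunBE (f : 'End(V)) c v : (f - c *: \1)%VF v = f v - c *: v.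
Proof. by rewrite add_lfunE opp_lfunE scale_lfunE id_lfunE. Qed.

End Gen.
Arguments seg_sub {F V d U lo hi X}.
Arguments sub_seg {F V d U lo hi} j.
Arguments mem_seg {F V d U lo hi} j {v}.
Arguments seg_seg {F V d U lo hi lo' hi'}.
Arguments seg_map {F V d U lo hi X f}.
Arguments seg0 {F V d U lo hi}.
Arguments img_sub {F V f X Y}.
Arguments mem_img_sub {F V f X Y v}.
Arguments mem_eig {F V}.
Arguments lfunBE {F V}.


Section Gen2.
Variables (F : fieldType) (V : vectType F).

Lemma sum_inv (I : Type) (g : 'End(V)) (r : seq I) (P : pred I) (W : I -> {vspace V}) :
  (forall j, P j -> forall w, w \in W j -> g w \in W j) ->
  forall w, w \in (\sum_(j <- r | P j) W j)%VS -> g w \in (\sum_(j <- r | P j) W j)%VS.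
Proof.
move=> H; elim: r => [|h r IH] w; first by rewrite big_nil memv0 => /eqP->; rewrite linear0 mem0v.
rewrite big_cons; case: ifP => Ph; last exact: IH.
move=> /memv_addP[x Hx [y Hy ->]]; rewrite linearD; apply: memv_add; last exact: IH.
exact: H.
Qed.

Lemma eig_indep (A : 'End(V)) (I : Type) (t : I -> F) c (r : seq I) (P : pred I) :
  (forall j, P j -> t j != c) ->
  (passmx.leigenspace A c :&: \sum_(j <- r | P j) passmx.leigenspace A (t j) = 0)%VS.
Proof.
move=> Hne; elim: r => [|h r IH]; first by rewrite big_nil capv0.
rewrite big_cons; case: ifP => Ph; last exact: IH.
apply/eqP; rewrite -subv0; apply/subvP => v /memv_capP[Hv /memv_addP[x Hx [y Hy Hxy]]].
pose g := (A - t h *: \1)%VF.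
have Hinv : forall w, w \in (\sum_(j <- r | P j) passmx.leigenspace A (t j))%VS ->
    g w \in (\sum_(j <- r | P j) passmx.leigenspace A (t j))%VS.
  apply: sum_inv => j Pj w Hw; have Aw : A w = t j *: w by move: Hw; rewrite mem_eig => /eqP.
  by rewrite /g lfunBE Aw -scalerBl memvZ.
have gv : g v = (c - t h) *: v.
  by move: Hv; rewrite mem_eig /g lfunBE => /eqP->; rewrite scalerBl.
have gx : g x = 0 by move: Hx; rewrite mem_eig /g lfunBE => /eqP->; rewrite subrr.
have : (c - t h) *: v \in (passmx.leigenspace A c :&: \sum_(j <- r | P j) passmx.leigenspace A (t j))%VS.
  rewrite memv_cap memvZ //= -gv Hxy linearD /= gx add0r; exact: Hinv.
rewrite IH !memv0 => H0; move: H0; rewrite scaler_eq0 subr_eq0 eq_sym (negbTE (Hne h Ph)) /= => /eqP->.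
by [].
Qed.

End Gen2.
Arguments sum_inv {F V I g r P W}.
Arguments eig_indep {F V A I t c r P}.


Section Split.
Variables (F : fieldType) (V : vectType F).
Variables (A As : 'End(V)) (d : nat) (th ths : nat -> F).
Variables (Vs Vss : nat -> {vspace V}).
Hypothesis eigA : forall j v, v \in Vs j -> A v = th j *: v.
Hypothesis eigAs : forall j v, v \in Vss j -> As v = ths j *: v.
Local Notation Vge m := (seg d Vs m d).
Local Notation Vsle m := (seg d Vss 0 m).
Hypothesis irr : TD_irreducible A As.
Hypothesis stdA : forall j, (j <= d)%N -> (A @: Vss j <= seg d Vss (j%:Z - 1) (j%:Z + 1))%VS.
Hypothesis stdAs : forall j, (j <= d)%N -> (As @: Vs j <= seg d Vs (j%:Z - 1) (j%:Z + 1))%VS.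
Hypothesis Vfull : seg d Vs 0 d = fullv.
Hypothesis V0nz : Vs 0%N != 0%VS.
Hypothesis Vs0nz : Vss 0%N != 0%VS.
Hypothesis V0ind : (Vs 0%N :&: seg d Vs 1 d = 0)%VS.

Lemma Vge_A (m : int) c v : v \in Vge m -> A v - c *: v \in Vge m.
Proof.
rewrite -lfunBE; apply: seg_map => j h1 h2 h3 w Hw; rewrite lfunBE.
first [rewrite (eigA _ _ Hw) | rewrite (eigAs _ _ Hw)]; rewrite -scalerBl.
by apply: (mem_seg j) => //; exact: memvZ.
Qed.

Lemma Vge_Ath (j : nat) v : v \in Vge j%:Z -> A v - th j *: v \in Vge (j%:Z + 1).
Proof.
rewrite -lfunBE; apply: seg_map => k h1 h2 h3 w Hw; rewrite lfunBE.
first [rewrite (eigA _ _ Hw) | rewrite (eigAs _ _ Hw)]; rewrite -scalerBl.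
case: (eqVneq k j) => [->|kj]; first by rewrite subrr scale0r mem0v.
by apply: (mem_seg k) => //; [slia | exact: memvZ].
Qed.

Lemma Vsle_A (m : int) c v : v \in Vsle m -> A v - c *: v \in Vsle (m + 1).
Proof.
rewrite -lfunBE; apply: seg_map => k h1 h2 h3 w Hw; rewrite lfunBE.
apply: memvB.
  have Hw' := mem_img_sub (stdA k h1) Hw.
  by apply: (subvP (seg_seg _) _ Hw') => j _ l1 l2; slia.
by apply: memvZ; apply: (mem_seg k) => //; slia.
Qed.

Lemma Vsle_Asth (j : nat) v : v \in Vsle j%:Z -> As v - ths j *: v \in Vsle (j%:Z - 1).
Proof.
rewrite -lfunBE; apply: seg_map => k h1 h2 h3 w Hw; rewrite lfunBE.
first [rewrite (eigA _ _ Hw) | rewrite (eigAs _ _ Hw)]; rewrite -scalerBl.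
case: (eqVneq k j) => [->|kj]; first by rewrite subrr scale0r mem0v.
by apply: (mem_seg k) => //; [slia | exact: memvZ].
Qed.

Lemma Vge_As (m : int) c v : v \in Vge m -> As v - c *: v \in Vge (m - 1).
Proof.
rewrite -lfunBE; apply: seg_map => k h1 h2 h3 w Hw; rewrite lfunBE.
apply: memvB.
  have Hw' := mem_img_sub (stdAs k h1) Hw.
  by apply: (subvP (seg_seg _) _ Hw') => j jd l1 l2; slia.
by apply: memvZ; apply: (mem_seg k) => //; slia.
Qed.


Local Notation T m := (Vsle m :&: Vge (m + 1))%VS.
Let Z := (\sum_(i < d.+1) T (i : nat)%:Z)%VS.

Lemma T_sub_Z (m : int) : (T m <= Z)%VS.
Proof.
case: m => n.
  case: (leqP n d) => nd.
    have nd' : (n < d.+1)%N by [].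
    exact: (sumv_sup (Ordinal nd')).
  by rewrite (@seg0 _ _ d Vs (n%:Z + 1) d) ?capv0 ?sub0v // => j h1 h2 h3; slia.
by rewrite (@seg0 _ _ d Vss 0 (Negz n)) ?cap0v ?sub0v // => j h1 h2 h3; slia.
Qed.

Lemma Z_A : (A @: Z <= Z)%VS.
Proof.
rewrite limg_sum; apply/subv_sumP => i _; apply: img_sub => x /memv_capP[h1 h2].
have -> : A x = (A x - th i.+1 *: x) + th i.+1 *: x by rewrite subrK.
apply: memvD.
  apply: (subvP (T_sub_Z (i.+1)%:Z)); rewrite memv_cap; apply/andP; split.
    have e : (i : nat)%:Z + 1 = (i.+1)%:Z by slia.
    by have := Vsle_A _ (th i.+1) _ h1; rewrite e.
  have e : (i : nat)%:Z + 1 = (i.+1)%:Z by slia.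
  rewrite e in h2; exact: Vge_Ath.
by apply: memvZ; apply: (subvP (T_sub_Z i)); rewrite memv_cap h1 h2.
Qed.

Lemma Z_As : (As @: Z <= Z)%VS.
Proof.
rewrite limg_sum; apply/subv_sumP => i _; apply: img_sub => x /memv_capP[h1 h2].
have -> : As x = (As x - ths i *: x) + ths i *: x by rewrite subrK.
apply: memvD.
  apply: (subvP (T_sub_Z ((i : nat)%:Z - 1))); rewrite memv_cap; apply/andP; split.
    exact: Vsle_Asth.
  have e : (i : nat)%:Z + 1 - 1 = (i : nat)%:Z - 1 + 1 by slia.
  by have := Vge_As _ (ths i) _ h2; rewrite e.
by apply: memvZ; apply: (subvP (T_sub_Z i)); rewrite memv_cap h1 h2.
Qed.

Lemma Z0 : Z = 0%VS.
Proof.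
have [] := irr Z Z_A Z_As => // Zf.
exfalso.
have H : (Vs 0%N <= Z)%VS by rewrite Zf subvf.
have ZV1 : (Z <= Vge 1)%VS.
  apply/subv_sumP => i _; apply: subv_trans (capvSr _ _) _.
  by apply: seg_seg => j h1 h2 h3; slia.
move/negP: V0nz; apply; rewrite -subv0 -V0ind subv_cap subvv.
exact: (subv_trans H ZV1).
Qed.

Lemma Zcap (m : int) : T m = 0%VS.
Proof. by apply/eqP; rewrite -subv0 -Z0; exact: T_sub_Z. Qed.


Local Notation Ui m := (Vsle m :&: Vge m)%VS.
Let W := (\sum_(i < d.+1) Ui (i : nat)%:Z)%VS.

Lemma Ui_sub_W (m : int) : (Ui m <= W)%VS.
Proof.
case: m => n.
  case: (leqP n d) => nd.
    have nd' : (n < d.+1)%N by [].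
    exact: (sumv_sup (Ordinal nd')).
  by rewrite (@seg0 _ _ d Vs n%:Z d) ?capv0 ?sub0v // => j h1 h2 h3; slia.
by rewrite (@seg0 _ _ d Vss 0 (Negz n)) ?cap0v ?sub0v // => j h1 h2 h3; slia.
Qed.

Lemma W_A : (A @: W <= W)%VS.
Proof.
rewrite limg_sum; apply/subv_sumP => i _; apply: img_sub => x /memv_capP[h1 h2].
have -> : A x = (A x - th i *: x) + th i *: x by rewrite subrK.
apply: memvD.
  apply: (subvP (Ui_sub_W ((i : nat)%:Z + 1))); rewrite memv_cap; apply/andP; split.
    exact: Vsle_A.
  exact: Vge_Ath.
by apply: memvZ; apply: (subvP (Ui_sub_W i)); rewrite memv_cap h1 h2.
Qed.

Lemma W_As : (As @: W <= W)%VS.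
Proof.
rewrite limg_sum; apply/subv_sumP => i _; apply: img_sub => x /memv_capP[h1 h2].
have -> : As x = (As x - ths i *: x) + ths i *: x by rewrite subrK.
apply: memvD.
  apply: (subvP (Ui_sub_W ((i : nat)%:Z - 1))); rewrite memv_cap; apply/andP; split.
    exact: Vsle_Asth.
  exact: Vge_As.
by apply: memvZ; apply: (subvP (Ui_sub_W i)); rewrite memv_cap h1 h2.
Qed.

Lemma Wf : W = fullv.
Proof.
have [] := irr W W_A W_As => // W0.
exfalso; move/negP: Vs0nz; apply; rewrite -subv0 -W0.
apply: subv_trans (Ui_sub_W 0).
by rewrite subv_cap Vfull subvf andbT; apply: (sub_seg 0%N).
Qed.

Lemma SE1 (m : int) : seg d (fun j : nat => Ui j%:Z) m d = Vge m.
Proof.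
have sub1 : (seg d (fun j : nat => Ui j%:Z) m d <= Vge m)%VS.
  apply: seg_sub => j h1 h2 h3; apply: subv_trans (capvSr _ _) _.
  by apply: seg_seg => k k1 k2 k3; slia.
apply: subv_anti; rewrite sub1 /=; apply/subvP => v Hv.
have : v \in W by rewrite Wf memvf.
case/memv_sumP => vs Hvs.
pose P := fun i : 'I_d.+1 => (m <= (i : nat)%:Z) && ((i : nat)%:Z <= d%:Z).
rewrite (bigID P) /= => Ev.
have Hs1 : \sum_(i < d.+1 | P i) vs i \in seg d (fun j : nat => Ui j%:Z) m d.
  by apply: memv_sumr => i Pi; exact: Hvs.
have Hs2 : \sum_(i < d.+1 | ~~ P i) vs i \in Vsle (m - 1).
  apply: memv_suml => i nPi; have /memv_capP[h _] := Hvs i isT.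
  apply: (subvP (seg_seg _) _ h) => j j1 j2 j3.
  move: nPi; rewrite /P => nPi.
  have il := ltn_ord i; slia.
have Hs2' : \sum_(i < d.+1 | ~~ P i) vs i \in Vge m.
  have -> : \sum_(i < d.+1 | ~~ P i) vs i = v - \sum_(i < d.+1 | P i) vs i.
    by rewrite Ev addrAC subrr add0r.
  by apply: memvB => //; apply: (subvP sub1).
have : \sum_(i < d.+1 | ~~ P i) vs i \in T (m - 1) by rewrite subrK memv_cap Hs2 Hs2'.
by rewrite Zcap memv0 Ev => /eqP->; rewrite addr0.
Qed.

Lemma SE2 (m : int) : seg d (fun j : nat => Ui j%:Z) 0 m = Vsle m.
Proof.
have sub1 : (seg d (fun j : nat => Ui j%:Z) 0 m <= Vsle m)%VS.
  apply: seg_sub => j h1 h2 h3; apply: subv_trans (capvSl _ _) _.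
  by apply: seg_seg => k k1 k2 k3; slia.
apply: subv_anti; rewrite sub1 /=; apply/subvP => v Hv.
have : v \in W by rewrite Wf memvf.
case/memv_sumP => vs Hvs.
pose P := fun i : 'I_d.+1 => (0 <= (i : nat)%:Z) && ((i : nat)%:Z <= m).
rewrite (bigID P) /= => Ev.
have Hs1 : \sum_(i < d.+1 | P i) vs i \in seg d (fun j : nat => Ui j%:Z) 0 m.
  by apply: memv_sumr => i Pi; exact: Hvs.
have Hs2 : \sum_(i < d.+1 | ~~ P i) vs i \in Vge (m + 1).
  apply: memv_suml => i nPi; have /memv_capP[_ h] := Hvs i isT.
  apply: (subvP (seg_seg _) _ h) => j j1 j2 j3.
  move: nPi; rewrite /P => nPi.
  have il := ltn_ord i; slia.
have Hs2' : \sum_(i < d.+1 | ~~ P i) vs i \in Vsle m.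
  have -> : \sum_(i < d.+1 | ~~ P i) vs i = v - \sum_(i < d.+1 | P i) vs i.
    by rewrite Ev addrAC subrr add0r.
  by apply: memvB => //; apply: (subvP sub1).
have : \sum_(i < d.+1 | ~~ P i) vs i \in T m by rewrite memv_cap Hs2 Hs2'.
by rewrite Zcap memv0 Ev => /eqP->; rewrite addr0.
Qed.

Lemma Ufull : seg d (fun j : nat => Ui j%:Z) 0 d = fullv.
Proof. by rewrite SE1. Qed.

Lemma Aup (j : nat) v : v \in Ui j%:Z -> A v - th j *: v \in Ui (j.+1)%:Z.
Proof.
move=> /memv_capP[h1 h2]; have e : j%:Z + 1 = (j.+1)%:Z by slia.
rewrite memv_cap -e; apply/andP; split; [exact: Vsle_A | exact: Vge_Ath].
Qed.

Lemma Asdown (j : nat) v : v \in Ui (j.+1)%:Z -> As v - ths j.+1 *: v \in Ui j%:Z.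
Proof.
move=> /memv_capP[h1 h2]; have e : (j.+1)%:Z - 1 = j%:Z by slia.
rewrite memv_cap -e; apply/andP; split; [exact: Vsle_Asth | exact: Vge_As].
Qed.

Lemma Asdown0 v : v \in Ui 0 -> As v - ths 0 *: v = 0.
Proof.
move=> /memv_capP[h1 h2]; have := Vsle_Asth 0 v h1.
by rewrite (@seg0 _ _ d Vss 0 (0%:Z - 1)) ?memv0 => [/eqP//|j h3 h4 h5]; slia.
Qed.

End Split.


Section QP.
Variables (F : fieldType) (q : F).
Hypothesis hq0 : q != 0.
Hypothesis hq : forall n : nat, (0 < n)%N -> q ^+ n != 1.

Lemma qinj (m n : int) : q ^ m = q ^ n -> m = n.
Proof.
move=> E; have E1 : q ^ (m - n) = 1.
  apply: (mulIf (expfz_neq0 n hq0)); by rewrite mul1r -expfzDr // subrK E.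
apply/eqP; rewrite -subr_eq0; move: E1; case: (m - n) => k.
  case: k => [//|k] E1; exfalso; move/negP: (hq k.+1 isT); apply.
  by apply/eqP; exact: E1.
move=> E1; exfalso; move/negP: (hq k.+1 isT); apply.
by rewrite -invr_eq1; apply/eqP; exact: E1.
Qed.

Lemma qmul (m n p : int) : m + n = p -> q ^ m * q ^ n = q ^ p.
Proof. by move=> <-; rewrite expfzDr. Qed.

End QP.

Section Rel.
Variables (F : fieldType) (V : vectType F).

Lemma lfunZ (f : 'End(V)) k v : f (k *: v) = k *: f v.
Proof. exact: linearZ. Qed.
Lemma lfunD (f : 'End(V)) u v : f (u + v) = f u + f v.
Proof. exact: linearD. Qed.
Lemma lfunB (f : 'End(V)) u v : f (u - v) = f u - f v.
Proof. exact: linearB. Qed.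

Lemma rel_on (X Y : 'End(V)) (t y y' al qq : F) (u r : V) :
  X u = t *: u + r -> Y u = y *: u -> Y r = y' *: r -> y = qq * y' -> y * t = al ->
  X (Y u) - qq *: Y (X u) = (al * (1 - qq)) *: u.
Proof.
move=> Xu Yu Yr Hy Hal.
rewrite Yu lfunZ Xu lfunD lfunZ Yu Yr.
rewrite !scalerDr !scalerA -Hal Hy opprD addrACA subrr addr0 -scalerBl.
congr (_ *: _); ring.
Qed.

Lemma rel_eig (X Y : 'End(V)) (t y al qq : F) v :
  (forall w, X (Y w) - qq *: Y (X w) = (al * (1 - qq)) *: w) ->
  X v = t *: v -> y * t = al ->
  X (Y v - y *: v) = (qq * t) *: (Y v - y *: v).
Proof.
move=> rel Xv Hal.
have H : X (Y v) = qq *: Y (X v) + (al * (1 - qq)) *: v.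
  by rewrite -(rel v) addrC subrK.
rewrite lfunB lfunZ H Xv lfunZ -Hal.
rewrite !scalerA scalerBr scalerA -addrA; congr (_ + _).
rewrite -scalerBl -scaleNr; congr (_ *: _); ring.
Qed.

End Rel.
Arguments qmul {F q} hq0 {m n} p.
Arguments qinj {F q} hq0 hq {m n}.
Arguments rel_on {F V X Y t y y' al qq u r}.
Arguments rel_eig {F V X Y t y al qq v}.


Section SegRev.
Variables (F : fieldType) (V : vectType F).

Lemma seg_rev d (U : nat -> {vspace V}) (lo hi : int) :
  seg d (fun j => U (d - j)%N) lo hi = seg d U (d%:Z - hi) (d%:Z - lo).
Proof.
apply: subv_anti; apply/andP; split; apply: seg_sub => j jd h1 h2.
  by apply: (sub_seg (d - j)%N) => //; [exact: leq_subr | slia | slia].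
have -> : U j = U (d - (d - j))%N by rewrite subKn.
by apply: (sub_seg (U := fun j => U (d - j)%N) (d - j)%N) => //; [exact: leq_subr | slia | slia].
Qed.

Lemma eq_seg d (U U' : nat -> {vspace V}) (lo hi : int) :
  (forall j, U j = U' j) -> seg d U lo hi = seg d U' lo hi.
Proof. by move=> H; rewrite /seg; apply: eq_bigr => j _; exact: H. Qed.

End SegRev.

Section Main.
Variables (F : fieldType) (V : vectType F) (q : F) (A As K : 'End(V)) (d : nat) (a as_ : F).
Variables (Vs Vss : nat -> {vspace V}).
Hypothesis hq0 : q != 0.
Hypothesis hq : forall n : nat, (0 < n)%N -> q ^+ n != 1.
Hypothesis ha : a != 0.
Hypothesis has : as_ != 0.
Local Notation th j := (a * q ^ (2 * (j : nat)%:Z - d%:Z)).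
Local Notation ths j := (as_ * q ^ (d%:Z - 2 * (j : nat)%:Z)).
Local Notation kk j := (q ^ (2 * (j : nat)%:Z - d%:Z)).
Local Notation cc j := (q ^ (d%:Z - 2 * (j : nat)%:Z)).
Hypothesis eigA : forall j v, (v \in Vs j) = (A v == th j *: v).
Hypothesis eigAs : forall j v, (v \in Vss j) = (As v == ths j *: v).
Hypothesis noA : forall v, A v = th d.+1 *: v -> v = 0.
Hypothesis noAs : forall v, As v = (as_ * q ^ (d%:Z + 2)) *: v -> v = 0.
Hypothesis irr : TD_irreducible A As.
Hypothesis stdA : forall j, (j <= d)%N -> (A @: Vss j <= seg d Vss (j%:Z - 1) (j%:Z + 1))%VS.
Hypothesis stdAs : forall j, (j <= d)%N -> (As @: Vs j <= seg d Vs (j%:Z - 1) (j%:Z + 1))%VS.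
Hypothesis Vfull : seg d Vs 0 d = fullv.
Hypothesis V0nz : Vs 0%N != 0%VS.
Hypothesis Vdnz : Vs d != 0%VS.
Hypothesis Vss0nz : Vss 0%N != 0%VS.
Hypothesis Vssdnz : Vss d != 0%VS.
Hypothesis ind0 : (Vs 0%N :&: seg d Vs 1 d = 0)%VS.
Hypothesis indd : (Vs d :&: seg d Vs 0 (d%:Z - 1) = 0)%VS.
Hypothesis hK : forall i, (i <= d)%N -> forall v, v \in dec_0sD d Vs Vss i -> K v = kk i *: v.

Lemma eigA1 j v : v \in Vs j -> A v = th j *: v.
Proof. by rewrite eigA => /eqP. Qed.
Lemma eigAs1 j v : v \in Vss j -> As v = ths j *: v.
Proof. by rewrite eigAs => /eqP. Qed.

Local Notation U := (dec_0sD d Vs Vss).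

Lemma U_SE1 m : seg d U m d = seg d Vs m d.
Proof. exact: (@SE1 _ _ A As d (fun j => th j) (fun j => ths j) Vs Vss eigA1 eigAs1 irr stdA stdAs Vfull V0nz Vss0nz ind0 m). Qed.
Lemma U_SE2 m : seg d U 0 m = seg d Vss 0 m.
Proof. exact: (@SE2 _ _ A As d (fun j => th j) (fun j => ths j) Vs Vss eigA1 eigAs1 irr stdA stdAs Vfull V0nz Vss0nz ind0 m). Qed.
Lemma U_full : seg d U 0 d = fullv.
Proof. by rewrite U_SE1. Qed.
Lemma U_Aup j v : v \in U j -> A v - th j *: v \in U j.+1.
Proof. exact: (@Aup _ _ A d (fun j => th j) Vs Vss eigA1 stdA V0nz Vss0nz j v). Qed.
Lemma U_Asdown j v : v \in U j.+1 -> As v - ths j.+1 *: v \in U j.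
Proof. exact: (@Asdown _ _ As d (fun j => ths j) Vs Vss eigAs1 stdAs V0nz Vss0nz j v). Qed.
Lemma U_Asdown0 v : v \in U 0%N -> As v - ths 0%N *: v = 0.
Proof. exact: (@Asdown0 _ _ As d (fun j => ths j) Vs Vss eigAs1 V0nz Vss0nz v). Qed.


Lemma q2 : q ^+ 2 = q ^ (2 : int). Proof. by []. Qed.

Lemma ck j : cc j * kk j = 1.
Proof. by rewrite (qmul hq0 0) ?expr0z //; slia. Qed.
Lemma kc j : kk j * cc j = 1.
Proof. by rewrite mulrC ck. Qed.

Lemma KU j v : v \in U j -> K v = kk j *: v.
Proof.
case: (leqP j d) => jd; first exact: hK.
move=> /memv_capP[_ h]; move: h.
rewrite (@seg0 _ _ d Vs j%:Z d) => [|k h1 h2 h3]; last slia.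
by rewrite memv0 => /eqP->; rewrite linear0 scaler0.
Qed.

Lemma Kinj : lker K == 0%VS.
Proof.
have Kf : limg K = fullv.
  apply/eqP; rewrite eqEsubv subvf /= -{1}U_full; apply: seg_sub => j jd _ _.
  apply/subvP => u Hu; have -> : u = K (cc j *: u).
    by rewrite lfunZ (KU _ _ Hu) scalerA ck scale1r.
by apply: memv_img; exact: memvf.
have := limg_ker_dim K fullv; rewrite Kf capfv => /eqP.
by rewrite -{2}(add0n (\dim fullv)) eqn_add2r dimv_eq0.
Qed.

Lemma KiU j v : v \in U j -> (K^-1)%VF v = cc j *: v.
Proof.
move=> Hv; have E : K (cc j *: v) = v by rewrite lfunZ (KU _ _ Hv) scalerA ck scale1r.
by rewrite -{1}E (lker0_lfunK Kinj).
Qed.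


Lemma zero_on_U (f : 'End(V)) : (forall j v, v \in U j -> f v = 0) -> forall v, f v = 0.
Proof.
move=> H v; have : f v \in 0%VS.
  apply: (seg_map (d := d) (U := U) (lo := 0) (hi := d)) => [j _ _ _ w Hw|].
    by rewrite (H j w Hw) mem0v.
  by rewrite U_full memvf.
by rewrite memv0 => /eqP.
Qed.

Lemma RA w : A ((K^-1)%VF w) - q ^+ 2 *: (K^-1)%VF (A w) = (a * (1 - q ^+ 2)) *: w.
Proof.
pose f := (A \o K^-1 - q ^+ 2 *: (K^-1 \o A) - (a * (1 - q ^+ 2)) *: \1)%VF.
have fE : forall v, f v = A ((K^-1)%VF v) - q ^+ 2 *: (K^-1)%VF (A v) - (a * (1 - q ^+ 2)) *: v.
  by move=> v; rewrite /f !add_lfunE !opp_lfunE !scale_lfunE !comp_lfunE id_lfunE.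
have : f w = 0.
  apply: (zero_on_U f _ w) => j v Hv; rewrite fE; apply/eqP; rewrite subr_eq0; apply/eqP.
  apply: (rel_on (t := th j) (r := A v - th j *: v)).
  - by rewrite addrC subrK.
  - exact: (KiU _ _ Hv).
  - exact: (KiU _ _ (U_Aup _ _ Hv)).
  - by rewrite q2 (qmul hq0 (d%:Z - 2 * j%:Z)) //; slia.
  - by rewrite mulrCA ck mulr1.
by rewrite fE => /eqP; rewrite subr_eq0 => /eqP.
Qed.

Lemma RAs w : As (K w) - q ^+ 2 *: K (As w) = (as_ * (1 - q ^+ 2)) *: w.
Proof.
pose f := (As \o K - q ^+ 2 *: (K \o As) - (as_ * (1 - q ^+ 2)) *: \1)%VF.
have fE : forall v, f v = As (K v) - q ^+ 2 *: K (As v) - (as_ * (1 - q ^+ 2)) *: v.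
  by move=> v; rewrite /f !add_lfunE !opp_lfunE !scale_lfunE !comp_lfunE id_lfunE.
have : f w = 0.
  apply: (zero_on_U f _ w) => j v Hv; rewrite fE; apply/eqP; rewrite subr_eq0; apply/eqP.
  apply: (rel_on (t := ths j) (r := As v - ths j *: v) (y' := q ^ (2 * j%:Z - d%:Z - 2))).
  - by rewrite addrC subrK.
  - exact: (KU _ _ Hv).
  - case: j Hv => [|j] Hv.
      by rewrite U_Asdown0 // linear0 scaler0.
    rewrite (KU _ _ (U_Asdown _ _ Hv)).
    by have -> : 2 * (j.+1)%:Z - d%:Z - 2 = 2 * j%:Z - d%:Z by slia.
  - by rewrite q2 (qmul hq0 (2 * j%:Z - d%:Z)) //; slia.
  - by rewrite mulrCA kc mulr1.
by rewrite fE => /eqP; rewrite subr_eq0 => /eqP.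
Qed.

Lemma R1 i v : v \in Vs i -> (K^-1)%VF v - cc i *: v \in Vs i.+1.
Proof.
move=> Hv; rewrite eigA (rel_eig RA (eigA1 _ _ Hv)); last by rewrite mulrCA ck mulr1.
apply/eqP; congr (_ *: _).
by rewrite mulrCA q2 (qmul hq0 (2 * (i.+1)%:Z - d%:Z)) //; slia.
Qed.

Lemma R1z v : v \in Vs d -> (K^-1)%VF v - cc d *: v = 0.
Proof. by move=> Hv; apply: noA; apply/eqP; rewrite -eigA; apply: R1. Qed.

Lemma R2 i v : v \in Vss i.+1 -> K v - kk i.+1 *: v \in Vss i.
Proof.
move=> Hv; rewrite eigAs (rel_eig RAs (eigAs1 _ _ Hv)); last by rewrite mulrCA kc mulr1.
apply/eqP; congr (_ *: _).
by rewrite mulrCA q2 (qmul hq0 (d%:Z - 2 * i%:Z)) //; slia.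
Qed.

Lemma R2z v : v \in Vss 0%N -> K v - kk 0%N *: v = 0.
Proof.
move=> Hv; apply: noAs; rewrite (rel_eig RAs (eigAs1 _ _ Hv)); last by rewrite mulrCA kc mulr1.
congr (_ *: _).
by rewrite mulrCA q2 (qmul hq0 (d%:Z + 2)) //; slia.
Qed.


Lemma Ga (f : 'End(V)) (s : nat -> F) (hf : forall j v, v \in U j -> f v = s j *: v) i v :
  v \in seg d U 0 i%:Z -> f v - s i *: v \in seg d U 0 (i%:Z - 1).
Proof.
move=> Hv; rewrite -lfunBE; apply: (seg_map _ v Hv) => j jd h1 h2 w Hw.
rewrite lfunBE (hf _ _ Hw) -scalerBl.
case: (eqVneq j i) => [->|ji]; first by rewrite subrr scale0r mem0v.
by apply: memvZ; apply: (mem_seg j) => //; slia.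
Qed.

Lemma Gb (f : 'End(V)) (s : nat -> F) (hf : forall j v, v \in U j -> f v = s j *: v) i v :
  v \in seg d U i%:Z d -> f v - s i *: v \in seg d U (i%:Z + 1) d.
Proof.
move=> Hv; rewrite -lfunBE; apply: (seg_map _ v Hv) => j jd h1 h2 w Hw.
rewrite lfunBE (hf _ _ Hw) -scalerBl.
case: (eqVneq j i) => [->|ji]; first by rewrite subrr scale0r mem0v.
by apply: memvZ; apply: (mem_seg j) => //; slia.
Qed.

Lemma G2 (m : int) v : v \in seg d Vs 0 m -> (K^-1)%VF v \in seg d Vs 0 (m + 1).
Proof.
move=> Hv; apply: (seg_map _ v Hv) => j jd h1 h2 u Hu.
have -> : (K^-1)%VF u = cc j *: u + ((K^-1)%VF u - cc j *: u) by rewrite addrC subrK.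
apply: memvD; first by apply: memvZ; apply: (mem_seg j) => //; slia.
case: (ltnP j d) => jd'.
  by apply: (mem_seg j.+1); [slia | slia | slia | exact: R1].
have jd2 : j = d by apply/eqP; rewrite eqn_leq jd jd'.
by rewrite jd2 R1z ?mem0v // -jd2.
Qed.

Lemma G3 (m : int) v : v \in seg d Vss m d -> K v \in seg d Vss (m - 1) d.
Proof.
move=> Hv; apply: (seg_map _ v Hv) => j jd h1 h2 u Hu.
have -> : K u = kk j *: u + (K u - kk j *: u) by rewrite addrC subrK.
apply: memvD; first by apply: memvZ; apply: (mem_seg j) => //; slia.
case: j jd h1 h2 Hu => [|j] jd h1 h2 Hu; first by rewrite R2z ?mem0v.
by apply: (mem_seg j) => //; [slia | slia | slia | exact: R2].
Qed.

Local Notation Vs' := (fun j : nat => Vs (d - j)%N).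
Local Notation Vss' := (fun j : nat => Vss (d - j)%N).

Lemma eigA' j v : v \in Vs' j -> A v = th (d - j)%N *: v.
Proof. exact: eigA1. Qed.
Lemma eigAs' j v : v \in Vss' j -> As v = ths (d - j)%N *: v.
Proof. exact: eigAs1. Qed.

Lemma stdA' j : (j <= d)%N -> (A @: Vss' j <= seg d Vss' (j%:Z - 1) (j%:Z + 1))%VS.
Proof.
move=> jd; rewrite seg_rev; apply: subv_trans (stdA (d - j)%N (leq_subr _ _)) _.
by apply: seg_seg => k k1 k2 k3; slia.
Qed.
Lemma stdAs' j : (j <= d)%N -> (As @: Vs' j <= seg d Vs' (j%:Z - 1) (j%:Z + 1))%VS.
Proof.
move=> jd; rewrite seg_rev; apply: subv_trans (stdAs (d - j)%N (leq_subr _ _)) _.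
by apply: seg_seg => k k1 k2 k3; slia.
Qed.
Lemma Vfull' : seg d Vs' 0 d = fullv.
Proof. by rewrite seg_rev subrr subr0 Vfull. Qed.
Lemma V0nz' : Vs' 0%N != 0%VS.
Proof. by rewrite /= subn0. Qed.
Lemma Vss0nz' : Vss' 0%N != 0%VS.
Proof. by rewrite /= subn0. Qed.
Lemma ind0' : (Vs' 0%N :&: seg d Vs' 1 d = 0)%VS.
Proof. by rewrite /= subn0 seg_rev subrr indd. Qed.

Lemma X_SE2 m : seg d (dec_0s0 d Vs Vss) 0 m = seg d Vss 0 m.
Proof.
rewrite -(@SE2 _ _ A As d (fun j => th (d - j)%N) (fun j => ths j) Vs' Vss eigA' eigAs1 irr stdA stdAs' Vfull' V0nz' Vss0nz ind0' m).
by apply: eq_seg => j; rewrite /dec_0s0 seg_rev subrr.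
Qed.

Lemma Y_SE1 m : seg d (dec_Ds0 d Vs Vss) m d = seg d Vs 0 (d%:Z - m).
Proof.
have := (@SE1 _ _ A As d (fun j => th (d - j)%N) (fun j => ths (d - j)%N) Vs' Vss' eigA' eigAs' irr stdA' stdAs' Vfull' V0nz' Vss0nz' ind0' m).
rewrite seg_rev subrr => <-.
by apply: eq_seg => j; rewrite /dec_Ds0 !seg_rev subrr subr0.
Qed.

Lemma Y_SE2 m : seg d (dec_Ds0 d Vs Vss) 0 m = seg d Vss (d%:Z - m) d.
Proof.
have := (@SE2 _ _ A As d (fun j => th (d - j)%N) (fun j => ths (d - j)%N) Vs' Vss' eigA' eigAs' irr stdA' stdAs' Vfull' V0nz' Vss0nz' ind0' m).
rewrite seg_rev subr0 => <-.
by apply: eq_seg => j; rewrite /dec_Ds0 !seg_rev subrr subr0.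
Qed.

Lemma W_SE1 m : seg d (dec_DsD d Vs Vss) m d = seg d Vs m d.
Proof.
rewrite -(@SE1 _ _ A As d (fun j => th j) (fun j => ths (d - j)%N) Vs Vss' eigA1 eigAs' irr stdA' stdAs Vfull V0nz Vss0nz' ind0 m).
by apply: eq_seg => j; rewrite /dec_DsD seg_rev subr0.
Qed.


Lemma C1 i : (i <= d)%N -> ((K - kk i *: \1)%VF @: Vs i <= seg d Vs (i%:Z + 1) d)%VS.
Proof.
move=> id; apply: img_sub => v Hv; rewrite lfunBE -U_SE1.
apply: (Gb K (fun j => kk j) KU); rewrite U_SE1.
by apply: (mem_seg i) => //; slia.
Qed.

Lemma C2 i : (i <= d)%N -> (((K^-1)%VF - cc i *: \1)%VF @: Vs i <= seg d Vs (i%:Z + 1) (i%:Z + 1))%VS.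
Proof.
move=> id; apply: img_sub => v Hv; rewrite lfunBE.
case: (ltnP i d) => id'.
  by apply: (mem_seg i.+1); [slia | slia | slia | exact: R1].
have e : i = d by apply/eqP; rewrite eqn_leq id id'.
by rewrite e R1z ?mem0v // -e.
Qed.

Lemma C3 i : (i <= d)%N -> ((K - kk i *: \1)%VF @: Vss i <= seg d Vss (i%:Z - 1) (i%:Z - 1))%VS.
Proof.
move=> id; apply: img_sub => v Hv; rewrite lfunBE.
case: i id Hv => [|i] id Hv; first by rewrite R2z ?mem0v.
by apply: (mem_seg i); [slia | slia | slia | exact: R2].
Qed.

Lemma C4 i : (i <= d)%N -> (((K^-1)%VF - cc i *: \1)%VF @: Vss i <= seg d Vss 0 (i%:Z - 1))%VS.
Proof.
move=> id; apply: img_sub => v Hv; rewrite lfunBE -U_SE2.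
apply: (Ga (K^-1)%VF (fun j => cc j) KiU); rewrite U_SE2.
by apply: (mem_seg i) => //; slia.
Qed.

Lemma C5 i : ((K - kk i *: \1)%VF @: U i)%VS = 0%VS.
Proof.
apply/eqP; rewrite -subv0; apply: img_sub => v Hv.
by rewrite lfunBE (KU _ _ Hv) subrr mem0v.
Qed.

Lemma C6 i : (((K^-1)%VF - cc i *: \1)%VF @: U i)%VS = 0%VS.
Proof.
apply/eqP; rewrite -subv0; apply: img_sub => v Hv.
by rewrite lfunBE (KiU _ _ Hv) subrr mem0v.
Qed.

Local Notation X := (dec_0s0 d Vs Vss).
Local Notation Y := (dec_Ds0 d Vs Vss).
Local Notation W := (dec_DsD d Vs Vss).

Lemma C7 i : (i <= d)%N -> ((K - kk i *: \1)%VF @: X i <= seg d X 0 (i%:Z - 1))%VS.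
Proof.
move=> id; apply: img_sub => v /memv_capP[h1 _]; rewrite lfunBE X_SE2 -U_SE2.
by apply: (Ga K (fun j => kk j) KU); rewrite U_SE2.
Qed.

Lemma C8 i : (i <= d)%N -> (((K^-1)%VF - cc i *: \1)%VF @: X i <= seg d X (i%:Z - 1) (i%:Z - 1))%VS.
Proof.
move=> id; apply: img_sub => v /memv_capP[h1 h2]; rewrite lfunBE.
have w1 : (K^-1)%VF v - cc i *: v \in seg d Vss 0 (i%:Z - 1).
  by rewrite -U_SE2; apply: (Ga (K^-1)%VF (fun j => cc j) KiU); rewrite U_SE2.
have w2 : (K^-1)%VF v - cc i *: v \in seg d Vs 0 (d%:Z - i%:Z + 1).
  apply: memvB; first exact: G2.
  by apply: memvZ; apply: (subvP (seg_seg _) _ h2) => k k1 k2 k3; slia.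
case: i id h1 h2 w1 w2 => [|i] id h1 h2 w1 w2.
  by move: w1; rewrite (@seg0 _ _ d Vss 0 (0%:Z - 1)) ?memv0 => [/eqP->|k k1 k2 k3]; [exact: mem0v | slia].
apply: (mem_seg i); [slia | slia | slia |].
rewrite /dec_0s0 memv_cap.
have e1 : (i.+1)%:Z - 1 = i%:Z by slia.
have e2 : d%:Z - (i.+1)%:Z + 1 = d%:Z - i%:Z by slia.
by rewrite e1 in w1; rewrite e2 in w2; rewrite w1 w2.
Qed.

Lemma C9 i : (i <= d)%N -> (K @: Y i <= seg d Y 0 (i%:Z + 1))%VS.
Proof.
move=> id; apply: img_sub => v /memv_capP[h1 _]; rewrite Y_SE2.
have e : d%:Z - (i%:Z + 1) = d%:Z - i%:Z - 1 by slia.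
by rewrite e; exact: G3.
Qed.

Lemma C10 i : (i <= d)%N -> ((K^-1)%VF @: Y i <= seg d Y (i%:Z - 1) d)%VS.
Proof.
move=> id; apply: img_sub => v /memv_capP[_ h2]; rewrite Y_SE1.
have e : d%:Z - (i%:Z - 1) = d%:Z - i%:Z + 1 by slia.
by rewrite e; exact: G2.
Qed.

Lemma C11 i : (i <= d)%N -> ((K - kk i *: \1)%VF @: W i <= seg d W (i%:Z + 1) (i%:Z + 1))%VS.
Proof.
move=> id; apply: img_sub => v /memv_capP[h1 h2]; rewrite lfunBE.
have w1 : K v - kk i *: v \in seg d Vss (d%:Z - i%:Z - 1) d.
  apply: memvB; first exact: G3.
  by apply: memvZ; apply: (subvP (seg_seg _) _ h1) => k k1 k2 k3; slia.
have w2 : K v - kk i *: v \in seg d Vs (i%:Z + 1) d.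
  by rewrite -U_SE1; apply: (Gb K (fun j => kk j) KU); rewrite U_SE1.
case: (ltnP i d) => id'.
  apply: (mem_seg i.+1); [slia | slia | slia |].
  rewrite /dec_DsD memv_cap.
  have e1 : d%:Z - i%:Z - 1 = d%:Z - (i.+1)%:Z by slia.
  have e2 : i%:Z + 1 = (i.+1)%:Z by slia.
  by rewrite e1 in w1; rewrite e2 in w2; rewrite w1 w2.
by move: w2; rewrite (@seg0 _ _ d Vs (i%:Z + 1) d) ?memv0 => [/eqP->|k k1 k2 k3]; [exact: mem0v | slia].
Qed.

Lemma C12 i : (i <= d)%N -> (((K^-1)%VF - cc i *: \1)%VF @: W i <= seg d W (i%:Z + 1) d)%VS.
Proof.
move=> id; apply: img_sub => v /memv_capP[_ h2]; rewrite lfunBE W_SE1 -U_SE1.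
by apply: (Gb (K^-1)%VF (fun j => cc j) KiU); rewrite U_SE1.
Qed.


Lemma claims i : (i <= d)%N ->
  [/\
   (let UU := dec_0D d Vs Vss in
     ((K - kk i *: \1)%VF @: UU i <= seg d UU (i%:Z + 1) d%:Z)%VS /\
     (((K^-1)%VF - cc i *: \1)%VF @: UU i <= seg d UU (i%:Z + 1) (i%:Z + 1))%VS),
   (let UU := dec_0sDs d Vs Vss in
     ((K - kk i *: \1)%VF @: UU i <= seg d UU (i%:Z - 1) (i%:Z - 1))%VS /\
     (((K^-1)%VF - cc i *: \1)%VF @: UU i <= seg d UU 0 (i%:Z - 1))%VS)
   &
   (let UU := dec_0sD d Vs Vss in
     ((K - kk i *: \1)%VF @: UU i)%VS = 0%VS /\ (((K^-1)%VF - cc i *: \1)%VF @: UU i)%VS = 0%VS)] /\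
  [/\
   (let UU := dec_0s0 d Vs Vss in
     ((K - kk i *: \1)%VF @: UU i <= seg d UU 0 (i%:Z - 1))%VS /\
     (((K^-1)%VF - cc i *: \1)%VF @: UU i <= seg d UU (i%:Z - 1) (i%:Z - 1))%VS),
   (let UU := dec_Ds0 d Vs Vss in
     (K @: UU i <= seg d UU 0 (i%:Z + 1))%VS /\
     ((K^-1)%VF @: UU i <= seg d UU (i%:Z - 1) d%:Z)%VS)
   &
   (let UU := dec_DsD d Vs Vss in
     ((K - kk i *: \1)%VF @: UU i <= seg d UU (i%:Z + 1) (i%:Z + 1))%VS /\
     (((K^-1)%VF - cc i *: \1)%VF @: UU i <= seg d UU (i%:Z + 1) d%:Z)%VS)].
Proof.
move=> id; split; split.
- exact: (conj (C1 i id) (C2 i id)).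
- exact: (conj (C3 i id) (C4 i id)).
- exact: (conj (C5 i) (C6 i)).
- exact: (conj (C7 i id) (C8 i id)).
- exact: (conj (C9 i id) (C10 i id)).
- exact: (conj (C11 i id) (C12 i id)).
Qed.

End Main.


Theorem theorem11p1 (F : closedFieldType) (V : vectType F)
    (q : F) (hq0 : q != 0) (hq : forall n : nat, (0 < n)%N -> q ^+ n != 1)
    (A As : 'End(V)) (hTD : tridiagonal_pair A As)
    (d : nat) (a as_ : F) (ha : a != 0) (has : as_ != 0)
    (hstdA : standard_ordering A As d
               (fun i => passmx.leigenspace A (a * q ^ (2 * i%:Z - d%:Z))))
    (hstdAs : standard_ordering As A d
               (fun i => passmx.leigenspace As (as_ * q ^ (d%:Z - 2 * i%:Z))))
    (K : 'End(V))
    (hK : forall i : nat, (i <= d)%N -> forall v, 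
        v \in dec_0sD d (fun i => passmx.leigenspace A (a * q ^ (2 * i%:Z - d%:Z)))
                        (fun i => passmx.leigenspace As (as_ * q ^ (d%:Z - 2 * i%:Z))) i ->
        K v = q ^ (2 * i%:Z - d%:Z) *: v) :
  let Vs := fun i : nat => passmx.leigenspace A (a * q ^ (2 * i%:Z - d%:Z)) in
  let Vss := fun i : nat => passmx.leigenspace As (as_ * q ^ (d%:Z - 2 * i%:Z)) in
  let Kp := fun i : nat => (K - q ^ (2 * i%:Z - d%:Z) *: \1)%VF in
  let Km := fun i : nat => ((K^-1)%VF - q ^ (d%:Z - 2 * i%:Z) *: \1)%VF in
  forall i : nat, (i <= d)%N ->
  [/\
   (* [0D] *)
   (let U := dec_0D d Vs Vss in
     (Kp i @: U i <= seg d U (i%:Z + 1) d%:Z)%VS /\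
     (Km i @: U i <= seg d U (i%:Z + 1) (i%:Z + 1))%VS),
   (* [0*D*] *)
   (let U := dec_0sDs d Vs Vss in
     (Kp i @: U i <= seg d U (i%:Z - 1) (i%:Z - 1))%VS /\
     (Km i @: U i <= seg d U 0 (i%:Z - 1))%VS)
   &
   (* [0*D] *)
   (let U := dec_0sD d Vs Vss in
     (Kp i @: U i)%VS = 0%VS /\ (Km i @: U i)%VS = 0%VS)] /\
  [/\
   (* [0*0] *)
   (let U := dec_0s0 d Vs Vss in
     (Kp i @: U i <= seg d U 0 (i%:Z - 1))%VS /\
     (Km i @: U i <= seg d U (i%:Z - 1) (i%:Z - 1))%VS),
   (* [D*0] *)
   (let U := dec_Ds0 d Vs Vss in
     (K @: U i <= seg d U 0 (i%:Z + 1))%VS /\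
     ((K^-1)%VF @: U i <= seg d U (i%:Z - 1) d%:Z)%VS)
   &
   (* [D*D] *)
   (let U := dec_DsD d Vs Vss in
     (Kp i @: U i <= seg d U (i%:Z + 1) (i%:Z + 1))%VS /\
     (Km i @: U i <= seg d U (i%:Z + 1) d%:Z)%VS)].
Proof.
move=> Vs Vss Kp Km i hi.
case: hTD => _ [[s Hs] _] _ _ irr.
case: hstdA => [[oA1 oA2 _] stdAs].
case: hstdAs => [[oS1 oS2 _] stdA].
have eigA : forall j v, (v \in Vs j) = (A v == (a * q ^ (2 * (j:nat)%:Z - d%:Z)) *: v).
  by move=> j v; exact: mem_eig.
have eigAs : forall j v, (v \in Vss j) = (As v == (as_ * q ^ (d%:Z - 2 * (j:nat)%:Z)) *: v).
  by move=> j v; exact: mem_eig.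
have thinj : forall m n : int, a * q ^ m = a * q ^ n -> m = n.
  by move=> m n /(mulfI ha); exact: (qinj hq0 hq).
have thsinj : forall m n : int, as_ * q ^ m = as_ * q ^ n -> m = n.
  by move=> m n /(mulfI has); exact: (qinj hq0 hq).
have scal_eq : forall (c1 c2 : F) (v : V), v != 0 -> c1 *: v = c2 *: v -> c1 = c2.
  move=> c1 c2 v vnz E; apply/eqP; rewrite -subr_eq0.
  have : (c1 - c2) *: v == 0 by rewrite scalerBl E subrr.
  by rewrite scaler_eq0 (negbTE vnz) orbF.
have noA : forall v, A v = (a * q ^ (2 * (d.+1 : nat)%:Z - d%:Z)) *: v -> v = 0.
  move=> v Av; apply/eqP; apply/negP => /negP vnz.
  have Hv : v \in passmx.leigenspace A (a * q ^ (2 * (d.+1 : nat)%:Z - d%:Z)) by rewrite mem_eig Av.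
  have nz : passmx.leigenspace A (a * q ^ (2 * (d.+1 : nat)%:Z - d%:Z)) != 0%VS.
    by apply/negP => /eqP E; move: Hv; rewrite E memv0; apply/negP.
  have [j jd Ej] := oA2 _ nz.
  rewrite -Ej in Hv; move: Hv; rewrite eigA Av => /eqP /(scal_eq _ _ _ vnz) /thinj.
  by move=> E; slia.
have noAs : forall v, As v = (as_ * q ^ (d%:Z + 2)) *: v -> v = 0.
  move=> v Av; apply/eqP; apply/negP => /negP vnz.
  have Hv : v \in passmx.leigenspace As (as_ * q ^ (d%:Z + 2)) by rewrite mem_eig Av.
  have nz : passmx.leigenspace As (as_ * q ^ (d%:Z + 2)) != 0%VS.
    by apply/negP => /eqP E; move: Hv; rewrite E memv0; apply/negP.
  have [j jd Ej] := oS2 _ nz.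
  rewrite -Ej in Hv; move: Hv; rewrite eigAs Av => /eqP /(scal_eq _ _ _ vnz) /thsinj.
  by move=> E; slia.
have Vfull : seg d Vs 0 d = fullv.
  apply/eqP; rewrite eqEsubv subvf /= -Hs.
  elim/big_rec: _ => [|t W _ HW]; first exact: sub0v.
  rewrite subv_add HW andbT.
  case: (eqVneq (passmx.leigenspace A t) 0%VS) => [->|nz]; first exact: sub0v.
  have [j jd Ej] := oA2 t nz; rewrite -Ej; apply: (sub_seg j) => //; slia.
have [t0 [_ V0nz]] := oA1 0%N (leq0n d).
have [t1 [_ Vdnz]] := oA1 d (leqnn d).
have [t2 [_ Vss0nz]] := oS1 0%N (leq0n d).
have [t3 [_ Vssdnz]] := oS1 d (leqnn d).
have ind0 : (Vs 0%N :&: seg d Vs 1 d = 0)%VS.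
  apply: (eig_indep (A := A) (t := fun j : 'I_d.+1 => a * q ^ (2 * (j:nat)%:Z - d%:Z))).
  by move=> j /andP[h1 h2]; apply/negP => /eqP /thinj; slia.
have indd : (Vs d :&: seg d Vs 0 (d%:Z - 1) = 0)%VS.
  apply: (eig_indep (A := A) (t := fun j : 'I_d.+1 => a * q ^ (2 * (j:nat)%:Z - d%:Z))).
  by move=> j /andP[h1 h2]; apply/negP => /eqP /thinj; slia.
exact: (@claims F V q A As K d a as_ Vs Vss hq0 ha has eigA eigAs noA noAs irr stdA stdAs
  Vfull V0nz Vdnz Vss0nz Vssdnz ind0 indd hK i hi).
Qed.
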